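(* In the following instance, $\mathrm{OPT}=\Omega(n\ln n/\ln\ln n)$; that is, there exist constants $\kappa>0$ and $n_0$ such that $\mathrm{OPT}\ge\kappa\, n\ln n/\ln\ln n$ for all $n\ge n_0$. Instance: $n$ unit-demand bidders and $m=n^2$ items; for each bidder $i$ and item $\ell$, the signal $s_{i\ell}$ equals $1$ with probability $1/n$ and $0$ with probability $1-1/n$, all signals mutually independent; bidder $i$'s value for item $\ell$ is $v_{i\ell}(\mathbf s)=1+\sum_{j=1}^n s_{j\ell}$.
   Context: Unit-demand: bidder $i$'s value for a set $T$ of items is $\max_{\ell\in T}v_{i\ell}(\mathbf s)$ (and $0$ for $T=\emptyset$). $\mathrm{OPT}=\mathbb E_{\mathbf s}[\mathrm{OPT}(\mathbf s)]$, where $\mathrm{OPT}(\mathbf s)$ is the maximum total value $\sum_{(i,\ell)\in\mu}v_{i\ell}(\mathbf s)$ over matchings $\mu$ of bidders to items (each bidder gets at most one item and each item goes to at most one bidder). *)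

(* Defs.v *)
From HB Require Import structures.
From mathcomp Require Import all_boot all_order all_algebra.
From mathcomp Require Import reals exp.
Set Implicit Arguments. Unset Strict Implicit. Unset Printing Implicit Defensive.
Import Order.TTheory GRing.Theory Num.Theory.
Local Open Scope ring_scope.

Definition signal (n : nat) := {ffun 'I_n * 'I_(n ^ 2) -> bool}.

Definition sprob (R : realType) (n : nat) (s : signal n) : R :=
  \prod_(p : 'I_n * 'I_(n ^ 2)) (if s p then n%:R^-1 else 1 - n%:R^-1).

Definition val (R : realType) (n : nat) (s : signal n)
    (i : 'I_n) (l : 'I_(n ^ 2)) : R :=
  1 + \sum_(j < n) (s (j, l) : nat)%:R.

Definition is_matching (n : nat) (mu : {ffun 'I_n -> option 'I_(n ^ 2)}) : bool :=
  [forall i, forall j, (i != j) ==> (mu i == None) || (mu i != mu j)].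

Definition match_value (R : realType) (n : nat) (s : signal n)
    (mu : {ffun 'I_n -> option 'I_(n ^ 2)}) : R :=
  \sum_(i < n) (if mu i is Some l then val R s i l else 0).

(* OPT(s): maximum total value over matchings (values are >= 0 and the empty
   matching has value 0, so 0 is a harmless neutral element). *)
Definition OPT_s (R : realType) (n : nat) (s : signal n) : R :=
  \big[Num.max/0]_(mu : {ffun 'I_n -> option 'I_(n ^ 2)} | is_matching mu)
     match_value R s mu.

Definition OPT (R : realType) (n : nat) : R :=
  \sum_(s : signal n) sprob R s * OPT_s R s.

(* Main.v *)
Require Import Defs.
From HB Require Import structures.
From mathcomp Require Import all_boot all_order all_algebra.
From mathcomp Require Import reals exp.
From mathcomp Require Import lra zify ring.
Import Order.TTheory GRing.Theory Num.Theory.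
Local Open Scope ring_scope.
Set Implicit Arguments. Unset Strict Implicit. Unset Printing Implicit Defensive.

Definition col n (s : signal n) (l : 'I_(n ^ 2)) : {set 'I_n} := [set j | s (j, l)].


Lemma binom_ge n k : (k <= n)%N -> (n ^ k <= 'C(n, k) * k ^ k)%N.
Proof.
move=> hkn.
have H : forall m, (m <= k)%N -> (n ^ m * k ^_ m <= n ^_ m * k ^ m)%N.
  elim => [|m IH] hm; first by rewrite !ffactn0 !expn0.
  rewrite !ffactnSr !expnSr mulnACA [X in (_ <= X)%N]mulnACA.
  apply: leq_mul; first exact: IH (ltnW hm).
  nia.
have := H k (leqnn k); rewrite ffactnn -bin_ffact.
by rewrite mulnAC leq_pmul2r // fact_gt0.
Qed.

Section Num.
Variable R : realType.

Lemma pow_bound (m : nat) : (0 < m)%N ->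
  (sequences.expR 1)^-1 <= (1 - (m.+1)%:R^-1 : R) ^+ m.
Proof.
move=> hm.
have xp : (0 : R) < m%:R by rewrite ltr0n.
have -> : (1 - (m.+1)%:R^-1 : R) = (1 + m%:R^-1)^-1.
  rewrite -natr1; field.
  by apply/andP; split; rewrite lt0r_neq0 // ?ltr_wpDl // ltr_pwDl // invr_gt0.
rewrite exprVn lef_pV2 ?posrE ?expR_gt0 ?exprn_gt0 //; last first.
  by rewrite ltr_wpDr // invr_ge0 ltW.
apply: (@le_trans _ _ (sequences.expR (m%:R^-1) ^+ m)).
  apply: lerXn2r; [by rewrite nnegrE addr_ge0 // invr_ge0 ltW | by rewrite nnegrE expR_ge0 | exact: expR_ge1Dx].
by rewrite -expRM_natl mulfV // lt0r_neq0.
Qed.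

Lemma pow_bound2 (n k : nat) : (1 <= k <= n)%N -> (2 <= n)%N ->
  (sequences.expR 1)^-1 <= (1 - n%:R^-1 : R) ^+ (n - k).
Proof.
case: n => [|m] // /andP [hk1 hkn] hm.
apply: (le_trans (pow_bound (m := m) _)); first by lia.
apply: ler_wiXn2l; last by lia.
  rewrite subr_ge0 invf_le1 ?ler1n ?ltr0n //.
by rewrite gerBl invr_ge0 ler0n.
Qed.

Lemma p_bound (n k : nat) : (1 <= k <= n)%N -> (2 <= n)%N ->
  sequences.expR 1 * (k%:R : R) ^+ k <= n%:R ->
  (n%:R : R)^-1 <= 'C(n, k)%:R * (n%:R^-1) ^+ k * (1 - n%:R^-1) ^+ (n - k).
Proof.
move=> hk hn hek.
have np : (0 : R) < n%:R by rewrite ltr0n; lia.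
have kp : (0 : R) < (k%:R) ^+ k by rewrite exprn_gt0 // ltr0n; lia.
have ep := expR_gt0 (1 : R).
have hC : ((n%:R : R) ^+ k) <= 'C(n, k)%:R * (k%:R) ^+ k.
  by rewrite -!natrX -natrM ler_nat binom_ge //; case/andP: hk.
have hC' : ((k%:R : R) ^+ k)^-1 <= 'C(n, k)%:R * (n%:R^-1) ^+ k.
  rewrite exprVn ler_pdivlMr ?exprn_gt0 // mulrC ler_pdivrMr //.
apply: (@le_trans _ _ (((k%:R : R) ^+ k)^-1 * (sequences.expR 1)^-1)).
  rewrite -invfM lef_pV2 ?posrE ?mulr_gt0 //.
  by rewrite mulrC.
apply: ler_pM => //.
- by rewrite invr_ge0 ltW.
- by rewrite invr_ge0 ltW.
- exact: pow_bound2.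
Qed.

End Num.

Section M.
Variables (R : realType) (n k : nat).

Lemma val_col (s : signal n) i l : Defs.val R s i l = 1 + #|col s l|%:R.
Proof.
rewrite /Defs.val; congr (1 + _).
rewrite -[#|_|%:R]/((1 : R) *+ #|col s l|) -sumr_const.
by rewrite [RHS]big_mkcond /=; apply: eq_bigr => j _; rewrite inE; case: (s (j, l)).
Qed.

Definition Lst (s : signal n) := enum [pred l : 'I_(n ^ 2) | #|col s l| == k].

Lemma sum_min (N m : nat) : \sum_(0 <= i < m) ((i < N)%N%:R : R) = (minn m N)%:R.
Proof.
elim: m => [|m IH]; first by rewrite big_geq // min0n.
rewrite big_nat_recr //= IH -natrD; congr (_%:R).
case: (leqP N m) => h /=; lia.
Qed.

Lemma OPT_ge (s : signal n) :
  (k.+1)%:R * (minn n (size (Lst s)))%:R <= OPT_s R s.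
Proof.
set L := Lst s.
set mu := [ffun i : 'I_n => nth None (map Some L) i].
have uL : uniq (map Some L) by rewrite (map_inj_uniq (@Some_inj _)) enum_uniq.
have Sz : forall (i : nat) l, nth None (map Some L) i = Some l -> (i < size L)%N.
  move=> i l E; rewrite ltnNge; apply/negP => h.
  by rewrite nth_default ?size_map in E.
have Nz : forall (i : nat), nth None (map Some L) i = None -> ~~ (i < size L)%N.
  move=> i E; apply/negP => h.
  have : None \in map Some L by rewrite -E mem_nth ?size_map.
  by case/mapP.
have mat : is_matching mu.
  apply/forallP => i; apply/forallP => j; apply/implyP => hij.
  rewrite !ffunE; case E: (nth None (map Some L) i) => [l|] //=.
  apply/negP => /eqP E2.
  have := nth_uniq None (i := i) (j := j) _ _ uL.
  rewrite size_map E -E2 eqxx => /(_ (Sz _ _ E) (Sz _ _ (esym E2))).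
  by move=> /esym /eqP /ord_inj hh; rewrite hh eqxx in hij.
have mv : match_value R s mu = (k.+1)%:R * (minn n (size L))%:R.
  rewrite /match_value -sum_min big_mkord mulr_sumr; apply: eq_bigr => i _.
  rewrite ffunE; case E: (nth None (map Some L) i) => [l|].
    rewrite (Sz _ _ E) mulr1 val_col.
    have : l \in L by rewrite -(mem_map (@Some_inj _)) -E mem_nth ?size_map // (Sz _ _ E).
    by rewrite mem_enum inE => /eqP ->; rewrite -natr1 addrC.
  by rewrite (negbTE (Nz _ E)) mulr0.
rewrite -mv /OPT_s (bigD1 mu) //=.
by rewrite le_max lexx.
Qed.

End M.


Section Prob.
Variables (R : realType) (n : nat).
Hypothesis n_gt0 : (0 < n)%N.

Definition q (b : bool) : R := if b then n%:R^-1 else 1 - n%:R^-1.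
Definition Ex (F : signal n -> R) : R := \sum_s sprob R s * F s.

Lemma qT : q true + q false = 1.
Proof. by rewrite /q addrC subrK. Qed.

Lemma E_prod (g : 'I_n * 'I_(n ^ 2) -> bool -> R) :
  Ex (fun s => \prod_p g p (s p)) = \prod_p \sum_b q b * g p b.
Proof.
rewrite bigA_distr_bigA /=; apply: eq_bigr => s _.
by rewrite /sprob -big_split.
Qed.

Definition G (T : 'I_(n ^ 2) -> option {set 'I_n}) (s : signal n) : R :=
  \prod_p (if T p.2 is Some A then ((s p) == (p.1 \in A))%:R else 1).

Definition w (A : {set 'I_n}) : R := \prod_j q (j \in A).

Lemma E_G T : Ex (G T) = \prod_l (if T l is Some A then w A else 1).
Proof.
rewrite (@E_prod (fun p b => if T p.2 is Some A then (b == (p.1 \in A))%:R else 1)).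
under eq_bigr => p _.
  rewrite big_bool /=.
  have -> : (q true * (if T p.2 is Some A then (true == (p.1 \in A))%:R else 1) +
     q false * (if T p.2 is Some A then (false == (p.1 \in A))%:R else 1))
     = (fun j l => if T l is Some A then q (j \in A) else 1) p.1 p.2.
    by case: (T p.2) => [A|] /=; [case: (p.1 \in A); rewrite /= ?mulr1 ?mulr0 ?addr0 ?add0r | rewrite !mulr1 qT].
  over.
rewrite -(pair_bigA _ (fun j l => if T l is Some A then q (j \in A) else 1)) /=.
rewrite exchange_big /=; apply: eq_bigr => l _.
by case: (T l) => [A|] //; rewrite big1.
Qed.

Lemma Ex_sum (I : finType) (P : pred I) (F : I -> signal n -> R) :
  Ex (fun s => \sum_(i | P i) F i s) = \sum_(i | P i) Ex (F i).
Proof.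
rewrite /Ex; under eq_bigr => s _ do rewrite big_distrr.
by rewrite exchange_big.
Qed.

Lemma Ex_le (F H : signal n -> R) : (forall s, F s <= H s) -> Ex F <= Ex H.
Proof.
move=> FH; apply: ler_sum => s _; apply: ler_wpM2l => //.
apply: prodr_ge0 => p _; rewrite /q; case: (s p).
  by rewrite invr_ge0 ler0n.
by rewrite subr_ge0 invf_le1 ?ler1n ?ltr0n.
Qed.

Lemma Ex_lin (a b : R) (F H : signal n -> R) :
  Ex (fun s => a * F s + b * H s) = a * Ex F + b * Ex H.
Proof.
rewrite /Ex (eq_bigr (fun s => sprob R s * (a * F s) + sprob R s * (b * H s))); last by move=> s _; rewrite mulrDr.
rewrite big_split /= !big_distrr /=; congr (_ + _); apply: eq_bigr => s _;
  by rewrite mulrCA.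
Qed.


Lemma Ex_ext (F H : signal n -> R) : (forall s, F s = H s) -> Ex F = Ex H.
Proof. by move=> FH; apply: eq_bigr => s _; rewrite FH. Qed.

Lemma prod_nat_bool (I : finType) (B : I -> bool) :
  \prod_i ((B i)%:R : R) = ([forall i, B i])%:R.
Proof.
case: (boolP [forall i, B i]) => H.
  by rewrite big1 // => i _; rewrite (forallP H).
move: H; rewrite negb_forall => /existsP [i /negbTE Hi].
by rewrite (bigD1 i) //= Hi mul0r.
Qed.

Lemma G_bool T s : G T s =
  ([forall p, if T p.2 is Some A then s p == (p.1 \in A) else true])%:R.
Proof. by rewrite /G -prod_nat_bool; apply: eq_bigr => p _; case: (T p.2). Qed.

Definition T1 (l : 'I_(n ^ 2)) (A : {set 'I_n}) :=
  fun l' => if l' == l then Some A else None.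
Definition T2 (l : 'I_(n ^ 2)) (A : {set 'I_n}) (l' : 'I_(n ^ 2)) (A' : {set 'I_n}) :=
  fun x => if x == l then Some A else if x == l' then Some A' else None.

Lemma G_T1 l A s : G (T1 l A) s = (col s l == A)%:R.
Proof.
rewrite G_bool; congr ((nat_of_bool _)%:R); apply/idP/eqP.
  move=> /forallP H; apply/setP => j; rewrite inE; have := H (j, l).
  by rewrite /T1 /= eqxx => /eqP.
move=> <-; apply/forallP => -[j l'] /=; rewrite /T1; case: eqP => // ->.
by rewrite inE.
Qed.

Lemma E_T1 l A : Ex (G (T1 l A)) = w A.
Proof.
rewrite E_G (bigD1 l) //= /T1 eqxx big1 ?mulr1 // => l' /negbTE ->.
by [].
Qed.

Lemma G_T1T1 l A l' A' s : l != l' ->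
  G (T1 l A) s * G (T1 l' A') s = G (T2 l A l' A') s.
Proof.
move=> hl; rewrite /G -big_split; apply: eq_bigr => p _ /=.
rewrite /T1 /T2; case: eqP => [->|_]; last by rewrite mul1r.
case: ifP => [/eqP E|_]; first by rewrite E eqxx in hl.
by rewrite mulr1.
Qed.

Lemma E_T2 l A l' A' : l != l' -> Ex (G (T2 l A l' A')) = w A * w A'.
Proof.
move=> hl; rewrite E_G (bigD1 l) //= /T2 eqxx (bigD1 l') 1?eq_sym //= eqxx.
case: ifP => [/eqP E|_]; first by rewrite E eqxx in hl.
rewrite big1 ?mulr1 // => x /andP [/negbTE -> /negbTE ->].
by [].
Qed.

Variable k : nat.
Definition X (s : signal n) (l : 'I_(n ^ 2)) : R := (#|col s l| == k)%:R.
Definition p : R := \sum_(A : {set 'I_n} | #|A| == k) w A.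

Lemma X_sum s l : X s l = \sum_(A : {set 'I_n} | #|A| == k) G (T1 l A) s.
Proof.
under eq_bigr do rewrite G_T1.
rewrite /X; case: (boolP (#|col s l| == k)) => H.
  rewrite (bigD1 (col s l)) //= eqxx big1 ?addr0 // => A /andP [_ hA].
  by rewrite eq_sym (negbTE hA).
rewrite big1 // => A hA; case: eqP => // E; by rewrite E hA in H.
Qed.

Lemma E_X l : Ex (fun s => X s l) = p.
Proof.
rewrite (Ex_ext (H := fun s => \sum_(A : {set 'I_n} | #|A| == k) G (T1 l A) s)).
  by rewrite Ex_sum; apply: eq_bigr => A _; rewrite E_T1.
by move=> s; rewrite X_sum.
Qed.

Lemma X01 s l : X s l * X s l = X s l.
Proof. by rewrite /X; case: (_ == _); rewrite ?mulr1 ?mulr0. Qed.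

Lemma E_XX l l' : l != l' -> Ex (fun s => X s l * X s l') = p * p.
Proof.
move=> hl.
rewrite (Ex_ext (H := fun s => \sum_(A : {set 'I_n} | #|A| == k)
    \sum_(A' : {set 'I_n} | #|A'| == k) G (T2 l A l' A') s)).
  rewrite Ex_sum /p big_distrlr /=; apply: eq_bigr => A _.
  by rewrite Ex_sum; apply: eq_bigr => A' _; rewrite E_T2.
move=> s; rewrite !X_sum big_distrlr /=; apply: eq_bigr => A _.
by apply: eq_bigr => A' _; rewrite G_T1T1.
Qed.

Definition Nn (s : signal n) : R := \sum_l X s l.

Lemma E_N : Ex Nn = p *+ (n ^ 2).
Proof.
rewrite /Nn Ex_sum (eq_bigr (fun _ => p)); last by move=> l _; rewrite E_X.
by rewrite sumr_const card_ord.
Qed.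

Lemma mulrn_le (x : R) a b : 0 <= x -> (a <= b)%N -> x *+ a <= x *+ b.
Proof. by move=> hx hab; rewrite -(subnK hab) mulrnDr lerDr mulrn_wge0. Qed.

Lemma p_ge0 : 0 <= p.
Proof.
apply: sumr_ge0 => A _; apply: prodr_ge0 => j _; rewrite /q; case: (_ \in _).
  by rewrite invr_ge0 ler0n.
by rewrite subr_ge0 invf_le1 ?ler1n ?ltr0n.
Qed.

Lemma E_N2 : Ex (fun s => Nn s * Nn s) <= p *+ (n ^ 2) + (p *+ (n ^ 2)) ^+ 2.
Proof.
rewrite /Nn (Ex_ext (H := fun s => \sum_l \sum_l' X s l * X s l')); last first.
  by move=> s; rewrite big_distrlr.
rewrite Ex_sum.
apply: (@le_trans _ _ (\sum_(l : 'I_(n ^ 2)) (p + p * p *+ (n ^ 2)))).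
  apply: ler_sum => l _; rewrite Ex_sum (bigD1 l) //=.
  have -> : Ex (fun s => X s l * X s l) = p.
    by rewrite -(E_X l); apply: Ex_ext => s; rewrite X01.
  rewrite lerD2l.
  rewrite (eq_bigr (fun _ => p * p)); last by move=> l' h; rewrite E_XX // eq_sym.
  rewrite sumr_const; apply: mulrn_le; first by rewrite mulr_ge0 // p_ge0.
  by rewrite -[X in (_ <= X)%N](card_ord (n ^ 2)) subset_leq_card // subset_predT.
rewrite sumr_const card_ord mulrnDl; apply: lerD => //.
by rewrite expr2 mulrnAl mulrnAr.
Qed.


Lemma w_eq A : w A = (n%:R^-1)^+#|A| * (1 - n%:R^-1)^+(n - #|A|).
Proof.
rewrite /w (bigID (fun j => j \in A)) /=.
rewrite (eq_bigr (fun _ => n%:R^-1)); last by move=> j ->.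
rewrite prodr_const.
rewrite (eq_bigl (fun j => j \in [predC A])); last by move=> j; rewrite inE.
rewrite (eq_bigr (fun _ => 1 - n%:R^-1)); last by move=> j; rewrite inE => /negbTE ->.
rewrite prodr_const; congr (_ * _ ^+ _).
move: (cardC A); rewrite card_ord => h; by rewrite -[X in (X - _)%N]h addKn.
Qed.

Lemma p_eq : p = 'C(n, k)%:R * (n%:R^-1)^+k * (1 - n%:R^-1)^+(n - k).
Proof.
rewrite /p (eq_bigr (fun _ => (n%:R^-1)^+k * (1 - n%:R^-1)^+(n - k))); last first.
  by move=> A /eqP hA; rewrite w_eq hA.
rewrite (eq_bigl (fun A => A \in [set A : {set 'I_n} | #|A| == k])); last first.
  by move=> A; rewrite inE.
by rewrite sumr_const card_draws card_ord -mulrA mulr_natl.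
Qed.

Lemma Nn_size s : Nn s = (size (Lst k s))%:R.
Proof.
rewrite /Lst -cardE /Nn -[RHS]/((1 : R) *+ #|_|) -sumr_const [RHS]big_mkcond /=.
by apply: eq_bigr => l _; rewrite /X inE; case: (_ == _).
Qed.

Lemma E_main : n%:R^-1 <= p -> (k.+1)%:R * n%:R / 2 <= Ex (@OPT_s R n).
Proof.
move=> hp.
have np : (0 : R) < n%:R by rewrite ltr0n.
set mu := p *+ (n ^ 2).
have hmu : n%:R <= mu.
  have -> : mu = p * (n%:R ^+ 2) by rewrite /mu -natrX mulr_natr.
  apply: (@le_trans _ _ (n%:R^-1 * n%:R ^+ 2)); last by apply: ler_wpM2r => //; rewrite exprn_ge0.
  by rewrite expr2 mulrA mulVf ?mul1r // lt0r_neq0.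
have mup : 0 < mu by apply: lt_le_trans hmu.
set t := n%:R / mu.
have tp : 0 < t by rewrite divr_gt0.
have t1 : t <= 1 by rewrite ler_pdivrMr // mul1r.
set c := t * t / (4 * n%:R).
have cp : 0 <= c.
  apply: divr_ge0; first by apply: mulr_ge0; apply: ltW.
  by apply: mulr_ge0 => //; apply: ltW.
set K : R := (k.+1)%:R.
have Kp : 0 < K by rewrite ltr0n.
have pt : forall s, K * t * Nn s + (- (K * c)) * (Nn s * Nn s) <= @OPT_s R n s.
  move=> s; apply: le_trans (OPT_ge R k s).
  rewrite Nn_size; set M := size (Lst k s).
  have -> : K * t * M%:R + - (K * c) * (M%:R * M%:R) = K * (t * M%:R - c * (M%:R * M%:R)) by ring.
  apply: ler_wpM2l; first exact: ltW.
  have Mp : (0 : R) <= M%:R by rewrite ler0n.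
  case: (leqP M n) => hM.

    have : t * M%:R <= M%:R by rewrite -[leRHS]mul1r ler_wpM2r.
    have : 0 <= c * (M%:R * M%:R) by rewrite mulr_ge0 // mulr_ge0.
    lra.

  have -> : t * M%:R - c * (M%:R * M%:R) = n%:R - (t * M%:R - 2 * n%:R) ^+ 2 / (4 * n%:R).
    rewrite /c; field; by rewrite lt0r_neq0.
  by rewrite gerBl divr_ge0 ?sqr_ge0 // mulr_ge0 // ltW.
apply: (@le_trans _ _ (Ex (fun s => K * t * Nn s + (- (K * c)) * (Nn s * Nn s)))); last first.
  exact: Ex_le.
rewrite Ex_lin E_N -/mu.
apply: (@le_trans _ _ (K * t * mu + - (K * c) * (mu + mu ^+ 2))); last first.
  rewrite lerD2l !mulNr lerN2; apply: ler_wpM2l; first by rewrite mulr_ge0 // ltW.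
  exact: E_N2.
have -> : K * t * mu + - (K * c) * (mu + mu ^+ 2) = K * (n%:R - (t + n%:R) / 4).
  have pp : 0 < p by apply: lt_le_trans hp; rewrite invr_gt0.
  rewrite /c /t; field; apply/andP; split; first by rewrite lt0r_neq0.
  by rewrite /= mulr1n lt0r_neq0.
rewrite -mulrA; apply: ler_wpM2l; first exact: ltW.
have : (1 : R) <= n%:R by rewrite ler1n.
lra.
Qed.

End Prob.

Lemma asym (R : realType) (K : nat) (a : R) : (2 <= K)%N -> 1 <= ln a ->
  a < 1 + K%:R * ln (K%:R : R) -> a / ln a <= 3 * K%:R.
Proof.
move=> hK hla hab.
have Kp : (0 : R) < K%:R by rewrite ltr0n; lia.
have K2 : (2 : R) <= K%:R by rewrite (ler_nat R 2 K).
have ap : 0 < a.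
  rewrite ltNge; apply/negP => h; move: hla; rewrite ln0 //; lra.
set L := ln (K%:R : R).
set i := (K%:R : R)^-1.
have ip : 0 < i by rewrite invr_gt0.
have iK : i * K%:R = 1 by rewrite mulVf // lt0r_neq0.
have hL : 1 - i <= L.
  have h1 : -1 < i - 1 by lra.
  have := le_ln1Dx h1; rewrite addrC subrK /i lnV ?posrE //; rewrite -/L; lra.
have KL : K%:R - 1 <= K%:R * L.
  have : K%:R * (1 - i) <= K%:R * L by apply: ler_wpM2l => //; apply: ltW.
  rewrite mulrBr => h; have h' : K%:R * i = 1 by rewrite mulrC. lra.
set b := 1 + K%:R * L.
have bK : K%:R <= b by rewrite /b; lra.
have bp : 0 < b by lra.
have lbL : L <= ln b by rewrite /L ler_ln ?posrE.
have Lp : 1/2 <= L.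
  have : i <= 1/2.
    rewrite /i -[1/2]/(1 / 2 : R) mul1r lef_pV2 ?posrE //; lra.
  lra.
have lbp : 0 < ln b by lra.
have lap : 0 < ln a by lra.
have hdiv : ln b - ln a <= b / a - 1.
  have h1 : -1 < b / a - 1 by have := divr_gt0 bp ap; lra.
  have := le_ln1Dx h1; rewrite addrC subrK ln_div ?posrE //.
have h2 : a * ln b <= b * ln a.
  have : a * (ln b - ln a) <= a * (b / a - 1) by apply: ler_wpM2l => //; apply: ltW.
  have ab : a * (b / a) = b by rewrite mulrCA mulfV ?mulr1 // lt0r_neq0.
  rewrite !mulrBr mulr1 ab => h.
  have hab2 : a < b by exact: hab.
  have : (b - a) * 1 <= (b - a) * ln a by apply: ler_wpM2l => //; lra.
  rewrite mulr1 mulrBl => h'; lra.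
have h3 : b <= 3 * K%:R * ln b.
  have : 3 * K%:R * L <= 3 * K%:R * ln b by apply: ler_wpM2l => //; lra.
  rewrite /b; lra.
rewrite ler_pdivrMr //.
have : a * ln b <= (3 * K%:R * ln a) * ln b.
  apply: (le_trans h2).
  rewrite mulrAC; apply: ler_wpM2r; [exact: ltW | exact: h3].
by rewrite ler_pM2r.
Qed.

Theorem mainTheorem5 (R : realType) :
  exists kappa : R, 0 < kappa /\
  exists n0 : nat, forall n : nat, (n0 <= n)%N ->
    kappa * n%:R * ln (n%:R) / ln (ln (n%:R)) <= OPT R n.
Proof.
exists (6%:R^-1); split; first by rewrite invr_gt0 ltr0n.
set e : R := sequences.expR 1.
have e1 : 2 <= e by have := expR_ge1Dx (1 : R); rewrite -/e; lra.
have ep : 0 < e by lra.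
have ee : e < sequences.expR e by have := expR_ge1Dx e; lra.
exists (maxn 3 (Num.truncn (sequences.expR e)).+1) => n hn.
have n3 : (3 <= n)%N by lia.
have hbig : sequences.expR e < n%:R.
  apply: (lt_le_trans (truncnS_gt _)); rewrite ler_nat; apply: leq_trans hn; exact: leq_maxr.
have np : (0 : R) < n%:R by rewrite ltr0n; lia.
have lnn : e < ln (n%:R : R).
  by rewrite -[X in X < _](expRK e) ltr_ln ?posrE ?expR_gt0.
have lln : 1 <= ln (ln (n%:R : R)).
  rewrite -[X in X <= _](expRK 1) -/e ler_ln ?posrE //; lra.
have ne : e <= n%:R by lra.
pose P k := (e * (k%:R : R) ^+ k <= n%:R).
have exP : exists k, P k by exists 1%N; rewrite /P expr1 mulr1.
have ubP : forall k, P k -> (k <= n)%N.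
  move=> k; rewrite /P => hk; rewrite leqNgt; apply/negP => hnk.
  have k1 : (1 <= k)%N by lia.
  have : (k%:R : R) <= (k%:R) ^+ k by apply: ler_eXnr; rewrite ?ler1n.
  have : (n%:R : R) < k%:R by rewrite ltr_nat.
  have : 0 <= (k%:R : R) ^+ k by rewrite exprn_ge0.
  move: hk; nra.
case: (ex_maxnP exP ubP) => k Pk kmax.
have k1 : (1 <= k)%N by apply: kmax; rewrite /P expr1 mulr1.
have kn : (k <= n)%N := ubP k Pk.
have nPk : ~~ P k.+1 by apply/negP => /kmax; rewrite ltnn.
have hp : (n%:R : R)^-1 <= p R n k.
  rewrite p_eq; apply: p_bound => //; [by rewrite k1 kn | lia].
have hopt := E_main (ltnW (ltnW n3)) hp.
have Kp : 0 < ((k.+1)%:R : R) by rewrite ltr0n.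
have hlt : ln (n%:R : R) < 1 + (k.+1)%:R * ln ((k.+1)%:R : R).
  move: nPk; rewrite /P -ltNge => h.
  have Kk : (0 : R) < (k.+1)%:R ^+ k.+1 by rewrite exprn_gt0.
  have h2 : ln (n%:R : R) < ln (e * (k.+1)%:R ^+ k.+1).
    by rewrite ltr_ln ?posrE ?mulr_gt0.
  move: h2; rewrite lnM ?posrE // expRK lnXn // => h3; rewrite mulr_natl; exact: h3.
have k2 : (2 <= k.+1)%N by rewrite ltnS.
have ha := asym k2 lln hlt.
rewrite -mulrA.
apply: (@le_trans _ _ (6%:R^-1 * n%:R * (3 * (k.+1)%:R))).
  apply: ler_wpM2l => //; apply: mulr_ge0; [by rewrite invr_ge0 ler0n | exact: ltW].
have fin : (6%:R^-1 : R) * n%:R * (3 * (k.+1)%:R) = (k.+1)%:R * n%:R / 2.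
  by field.
rewrite fin /OPT.
exact: hopt.
Qed.
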